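(* Let $\rho\in(0,1]$, $r,h,p,q\in\mathbb{N}$ with $r\geq 2$, and let $\mathcal{N}$ be a support-preserving Euclidean $\rho$-net on the set of all $h$-sparse unit vectors in $\mathbb{R}^q$. Let $T$ be any $p\times q$ real matrix. Then $$\sup_{\substack{u\in S^{q-1},\\|\mathrm{supp}\,u|\leq h}}\textstyle\max^{(r)}_{\ell\in[p]}|Tu|_\ell\leq 2\sup_{v\in\mathcal{N}}\max^{(\lfloor r/2\rfloor)}_{\ell\in[p]}|Tv|_\ell+\frac{4\rho}{\sqrt{r}}\sup_{\substack{u\in S^{q-1},\\|\mathrm{supp}\,u|\leq h}}\Bigl(\sum_{i=1}^r\bigl(\max^{(i)}_{\ell\in[p]}|Tu|_\ell\bigr)^2\Bigr)^{1/2}.$$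
   Context: A vector is $h$-sparse if it has at most $h$ nonzero coordinates. A subset $\mathcal{N}$ of a set $S\subset\mathbb{R}^q$ is a support-preserving Euclidean $\rho$-net in $S$ if for every $x\in S$ there is $y\in\mathcal{N}$ with $\mathrm{supp}\,y\subset\mathrm{supp}\,x$ and $\|x-y\|\leq\rho$. For $v\in\mathbb{R}^p$, $|v|_\ell$ is the absolute value of its $\ell$-th coordinate. For a non-negative sequence $(a_\ell)_{\ell\in J}$ and $k\in\mathbb{N}$, $\max^{(k)}_{\ell\in J}a_\ell$ denotes its $k$-th largest element ($0$ if $k>|J|$). *)

(* Defs.v *)
From HB Require Import structures.
From mathcomp Require Import all_boot all_order all_algebra.
From mathcomp Require Import all_classical all_reals.
Set Implicit Arguments. Unset Strict Implicit. Unset Printing Implicit Defensive.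
Import Order.TTheory GRing.Theory Num.Theory.
Local Open Scope ring_scope.
Local Open Scope classical_set_scope.

Definition enorm (R : realType) (q : nat) (v : 'cV[R]_q) : R :=
  Num.sqrt (\sum_(i < q) (v i 0) ^+ 2).

Definition supp (R : realType) (q : nat) (v : 'cV[R]_q) : {set 'I_q} :=
  [set i | v i 0 != 0].

Definition sparse (R : realType) (q h : nat) (v : 'cV[R]_q) : bool :=
  (#|supp v| <= h)%N.

Definition sparse_sphere (R : realType) (q h : nat) : set 'cV[R]_q :=
  [set u | enorm u = 1 /\ sparse h u].

Definition sp_net (R : realType) (q : nat) (rho : R)
    (S N : set 'cV[R]_q) : Prop :=
  N `<=` S /\
  forall x, S x -> exists y, N y /\ supp y \subset supp x /\ enorm (x - y) <= rho.

(* k-th largest element of a (non-negative) family (a_l)_{l in 'I_p};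
   0 if k > p.  (k = 0 is never used; it is given the value 0.) *)
Definition kmax (R : realType) (p : nat) (k : nat) (a : 'I_p -> R) : R :=
  if k is k'.+1 then nth 0 (sort (fun x y : R => y <= x) [seq a l | l <- enum 'I_p]) k'
  else 0.

Definition absTu (R : realType) (p q : nat) (T : 'M[R]_(p, q)) (u : 'cV[R]_q)
  : 'I_p -> R := fun l => `|(T *m u) l 0|.

(* Main.v *)
Require Import Defs.
From HB Require Import structures.
From mathcomp Require Import all_boot all_order all_algebra.
From mathcomp Require Import all_classical all_reals.
From mathcomp Require Import zify ring lra.
Import Order.TTheory GRing.Theory Num.Theory.
Set Implicit Arguments. Unset Strict Implicit.
Local Open Scope ring_scope.

Section L.
Variable R : realType.
Definition geR := (fun x y : R => y <= x).
Lemma geR_trans : transitive geR.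
Proof. by move=> x y z /= hyx hzy; exact: le_trans hzy hyx. Qed.

Lemma all_le_head (x : R) s : path geR x s -> all (fun y => y <= x) s.
Proof. by move/(order_path_min geR_trans). Qed.

Lemma listF1 (s : seq R) : sorted geR s ->
  forall k : nat, (count (fun x : R => (nth 0%R s k < x)%R) s <= k)%N.
Proof.
elim: s => [|x s IH] //= Hp k.
have Ha := all_le_head Hp.
have Hs : sorted geR s := path_sorted Hp.
case: k => [|k] /=.
  rewrite ltxx add0n leqn0 -/(nilp _) /= eqn0Ngt -has_count.
  apply/hasPn => y /(allP Ha) hy; by rewrite -leNgt.
have := IH Hs k; case: (_ < x) => /=; lia.
Qed.

Lemma listF2 (s : seq R) (t : R) : sorted geR s -> 0 <= t ->
  forall k : nat, (count (fun x : R => (t < x)%R) s <= k)%N -> nth 0%R s k <= t.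
Proof.
move=> + t0; elim: s => [|x s IH] Hp k //=; first by rewrite nth_nil.
have Ha := all_le_head Hp.
have Hs : sorted geR s := path_sorted Hp.
case: k => [|k] /=.
  by case: ltP.
case: ltP => /= hx hc.
  by apply: IH => //; lia.
have [hk|hk] := ltnP k (size s).
  have := allP Ha _ (mem_nth 0 hk) => /= h; exact: le_trans h hx.
by rewrite nth_default.
Qed.
Lemma geR_total : total geR.
Proof. by move=> x y; rewrite /geR orbC le_total. Qed.

Definition kcnt (p : nat) (a : 'I_p -> R) (t : R) :=
  count (fun l => (t < a l)%R) (enum 'I_p).

Lemma kcnt_sort p (a : 'I_p -> R) t :
  kcnt a t = count (fun x : R => (t < x)%R) (sort geR [seq a l | l <- enum 'I_p]).
Proof. by rewrite (permP (permEl (perm_sort _ _))) count_map. Qed.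

Lemma KF1 p (a : 'I_p -> R) k : (0 < k)%N -> (kcnt a (kmax k a) < k)%N.
Proof.
case: k => [|k] // _; rewrite kcnt_sort /=.
rewrite ltnS; exact: (listF1 (sort_sorted geR_total [seq a l | l <- enum 'I_p]) k).
Qed.

Lemma KF2 p (a : 'I_p -> R) k t : 0 <= t -> (kcnt a t < k)%N -> kmax k a <= t.
Proof.
case: k => [|k] // t0; rewrite kcnt_sort /= ltnS => h.
exact: listF2 (sort_sorted geR_total _) t0 _ h.
Qed.

Lemma KF0 p (a : 'I_p -> R) k : (forall l, 0 <= a l) -> 0 <= kmax k a.
Proof.
move=> ha; case: k => [|k] //=.
set s := sort _ _.
have [hk|hk] := ltnP k (size s); last by rewrite nth_default.
have := mem_nth 0%R hk; rewrite mem_sort => /mapP [l _ ->]; exact: ha.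
Qed.

Lemma Kmono p (a b : 'I_p -> R) k : (forall l, 0 <= b l) -> (forall l, a l <= b l) ->
  kmax k a <= kmax k b.
Proof.
move=> hb hab; case: k => [|k]; first by [].
apply: KF2; first exact: KF0.
apply: leq_ltn_trans (KF1 b (ltn0Sn k)).
apply: sub_count => l /= h; exact: lt_le_trans h (hab l).
Qed.

Lemma Kanti p (a : 'I_p -> R) i j : (forall l, 0 <= a l) -> (0 < i <= j)%N ->
  kmax j a <= kmax i a.
Proof.
move=> ha /andP[i0 ij]; apply: KF2; first exact: KF0.
exact: leq_trans (KF1 a i0) ij.
Qed.

Lemma Ksum p (a b c : 'I_p -> R) k1 k2 :
  (0 < k1)%N -> (0 < k2)%N -> (forall l, 0 <= a l) -> (forall l, 0 <= b l) ->
  (forall l, c l <= a l + b l) ->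
  kmax (k1 + k2).-1 c <= kmax k1 a + kmax k2 b.
Proof.
move=> h1 h2 ha hb hc; apply: KF2; first by apply: addr_ge0; exact: KF0.
have e1 := KF1 a h1; have e2 := KF1 b h2.
rewrite /kcnt.
set P := (fun l => _ < c l).
set A := (fun l => kmax k1 a < a l).
set B := (fun l => kmax k2 b < b l).
have : (count P (enum 'I_p) <= count A (enum 'I_p) + count B (enum 'I_p))%N.
  rewrite -count_predUI; apply: leq_trans (leq_addr _ _).
  apply: sub_count => l; rewrite /P /A /B /= => h.
  apply/negPn/negP; rewrite negb_or -!leNgt => /andP[u v].
  have := lt_le_trans h (hc l); rewrite ltNge => /negP; apply.
  exact: lerD.
have e1' : (count A (enum 'I_p) < k1)%N := e1.
have e2' : (count B (enum 'I_p) < k2)%N := e2.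
move: e1' e2'; clear; lia.
Qed.

Lemma sumsq_ge0 q (v : 'cV[R]_q) : 0 <= \sum_(i < q) (v i 0) ^+ 2.
Proof. by apply: sumr_ge0 => i _; exact: sqr_ge0. Qed.

Lemma enorm_ge0 q (v : 'cV[R]_q) : 0 <= enorm v.
Proof. exact: sqrtr_ge0. Qed.

Lemma enorm_sq q (v : 'cV[R]_q) : enorm v ^+ 2 = \sum_(i < q) (v i 0) ^+ 2.
Proof. by rewrite /enorm sqr_sqrtr // sumsq_ge0. Qed.

Lemma coord_sq q (v : 'cV[R]_q) i : (v i 0) ^+ 2 <= enorm v ^+ 2.
Proof.
rewrite enorm_sq (bigD1 i) //= lerDl; apply: sumr_ge0 => j _; exact: sqr_ge0.
Qed.

Lemma coord_le1 q (v : 'cV[R]_q) i : enorm v = 1 -> `|v i 0| <= 1.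
Proof.
move=> h; have := coord_sq v i; rewrite h expr1n -real_normK ?num_real //.
have := normr_ge0 (v i 0); move: (`|v i 0|) => x; nra.
Qed.

Lemma enorm_scale q (c : R) (v : 'cV[R]_q) : enorm (c *: v) = `|c| * enorm v.
Proof.
rewrite /enorm.
have -> : \sum_(i < q) ((c *: v) i 0) ^+ 2 = c ^+ 2 * \sum_(i < q) (v i 0) ^+ 2.
  rewrite mulr_sumr; apply: eq_bigr => i _; by rewrite mxE exprMn.
by rewrite sqrtrM ?sqr_ge0 // sqrtr_sqr.
Qed.

Lemma enorm0_eq q (v : 'cV[R]_q) : enorm v = 0 -> v = 0.
Proof.
move=> h; apply/matrixP => i j; rewrite (ord1 j) mxE.
have := coord_sq v i; rewrite h expr0n /= => h2.
apply/eqP; rewrite -sqrf_eq0; apply/eqP/le_anti; rewrite h2 sqr_ge0 //.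
Qed.

Lemma absTu_ge0 p q (T : 'M[R]_(p, q)) u l : 0 <= absTu T u l.
Proof. exact: normr_ge0. Qed.

Definition Bnd p q (T : 'M[R]_(p, q)) := \sum_(l < p) \sum_(j < q) `|T l j|.

Lemma absTu_le p q (T : 'M[R]_(p, q)) u l : enorm u = 1 -> absTu T u l <= Bnd T.
Proof.
move=> hu; rewrite /absTu mxE.
apply: le_trans (ler_norm_sum _ _ _) _.
apply: (@le_trans _ _ (\sum_(j < q) `|T l j|)).
  apply: ler_sum => j _; rewrite normrM.
  have := coord_le1 j hu; have := normr_ge0 (T l j); have := normr_ge0 (u j 0); nra.
rewrite /Bnd (bigD1 l) //= lerDl; apply: sumr_ge0 => k _; apply: sumr_ge0 => j _.
exact: normr_ge0.
Qed.

Lemma kmax_le p q (T : 'M[R]_(p, q)) u k : enorm u = 1 -> kmax k (absTu T u) <= Bnd T.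
Proof.
move=> hu; case: k => [|k]; first by rewrite /Bnd /=; apply: sumr_ge0 => l _; apply: sumr_ge0 => j _; exact: normr_ge0.
apply: KF2.
  by rewrite /Bnd; apply: sumr_ge0 => l _; apply: sumr_ge0 => j _; exact: normr_ge0.
rewrite /kcnt; suff -> : count (fun l => Bnd T < absTu T u l) (enum 'I_p) = 0%N by [].
apply/eqP; rewrite -leqn0 leqNgt -has_count; apply/hasPn => l _.
by rewrite -leNgt; exact: absTu_le.
Qed.

Lemma sup_ge0 (E : set R) : (forall x, E x -> 0 <= x) -> has_ubound E -> 0 <= sup E.
Proof.
move=> h hub; have [[x Ex]|ne] := pselect (E !=set0)%classic.
  exact: le_trans (h _ Ex) (ub_le_sup hub Ex).
have -> : E = set0 by apply/seteqP; split => x // Ex; apply: ne; exists x.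
by rewrite sup0.
Qed.
End L.

Unset Implicit Arguments.
Local Open Scope classical_set_scope.

Theorem lemma4p3 (R : realType) (rho : R) (r h p q : nat)
    (N : set 'cV[R]_q) (T : 'M[R]_(p, q)) :
  0 < rho -> rho <= 1 -> (2 <= r)%N ->
  @sp_net R q rho (@sparse_sphere R q h) N ->
  sup [set kmax r (absTu T u) | u in @sparse_sphere R q h]
  <= 2 * sup [set kmax r./2 (absTu T v) | v in N]
     + 4 * rho / Num.sqrt (r%:R)
       * sup [set Num.sqrt (\sum_(1 <= i < r.+1) (kmax i (absTu T u)) ^+ 2)
              | u in @sparse_sphere R q h].
Proof.
move=> rho0 rho1 r2 [NS Hnet].
set S := sparse_sphere h.
set E1 := [set kmax r (absTu T u) | u in S].
set E2 := [set kmax r./2 (absTu T v) | v in N].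
set E3 := [set Num.sqrt (\sum_(1 <= i < r.+1) (kmax i (absTu T u)) ^+ 2) | u in S].
have B0 : 0 <= Bnd T.
  by rewrite /Bnd; apply: sumr_ge0 => l _; apply: sumr_ge0 => j _; exact: normr_ge0.
have hE2 : has_ubound E2.
  exists (Bnd T) => x [v Nv <-]; apply: kmax_le; by case: (NS _ Nv).
have hE3 : has_ubound E3.
  exists (Num.sqrt (\sum_(1 <= i < r.+1) (Bnd T) ^+ 2)) => x [u [hu _] <-].
  rewrite ler_sqrt; last by apply: sumr_ge0 => i _; exact: sqr_ge0.
  apply: ler_sum_nat => i _.
  have := kmax_le T i hu; have := KF0 i (absTu_ge0 T u); timeout 15 nra.
set A := sup E2; set M := sup E3.
have A0 : 0 <= A.
  apply: sup_ge0 hE2 => x [v _ <-]; exact: KF0 (absTu_ge0 T v).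
have M0 : 0 <= M.
  apply: sup_ge0 hE3 => x [v _ <-]; exact: sqrtr_ge0.
have hd := odd_double_half r; rewrite -muln2 in hd.
have h1 : (0 < r./2)%N by rewrite half_gt0.
set k2 := (r - r./2).+1.
have h2 : (0 < k2)%N by [].
have ek : (r./2 + k2).-1 = r by rewrite /k2; lia.
have rk2 : (r <= 2 * k2)%N by rewrite /k2; lia.
have k2r : (k2 <= r)%N by rewrite /k2; lia.
set sr := Num.sqrt (r%:R : R).
have sr0 : 0 < sr by rewrite sqrtr_gt0 ltr0n; lia.
have srr : sr ^+ 2 = r%:R by rewrite sqr_sqrtr // ler0n.
have C0 : 0 <= 4 * rho / sr * M.
  apply: mulr_ge0 => //; apply: divr_ge0; last exact: ltW.
  by apply: mulr_ge0 => //; exact: ltW.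
have RHS0 : 0 <= 2 * A + 4 * rho / sr * M.
  by apply: addr_ge0 => //; apply: mulr_ge0.
have [ne|ne] := pselect (E1 !=set0); last first.
  have -> : E1 = set0 by apply/seteqP; split => x // Ex; apply: ne; exists x.
  by rewrite sup0.
apply: ge_sup ne _ => x [u Su <-].
have [hu hsp] := Su.
have [y [Ny [hsupp hdist]]] := Hnet u Su.
set c := absTu T u; set a := absTu T y; set b := absTu T (u - y).
have hcab : forall l, c l <= a l + b l.
  move=> l; rewrite /c /a /b /absTu.
  have -> : T *m u = T *m y + T *m (u - y) by rewrite -mulmxDr addrC subrK.
  rewrite mxE; exact: ler_normD.
have K1 := Ksum h1 h2 (absTu_ge0 T y) (absTu_ge0 T (u - y)) hcab.
rewrite ek in K1.
have hA : kmax r./2 a <= A by apply: (ub_le_sup hE2 (x:=kmax r./2 a)); exists y.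
suff hK : kmax k2 b <= 4 * rho / sr * M by timeout 15 lra.
have [e0|ne0] := eqVneq (u - y) 0.
  apply: le_trans C0; apply: KF2 => //.
  rewrite /kcnt; suff -> : count (fun l => 0 < b l) (enum 'I_p) = 0%N by [].
  apply/eqP; rewrite -leqn0 leqNgt -has_count; apply/hasPn => l _.
  by rewrite /b /absTu e0 mulmx0 mxE normr0 ltxx.
set s := enorm (u - y).
have s0 : 0 < s.
  rewrite lt_def enorm_ge0 andbT; apply/eqP => /enorm0_eq; exact/eqP.
set w := s^-1 *: (u - y).
have Sw : S w.
  split.
    by rewrite /w enorm_scale ger0_norm ?invr_ge0 ?(ltW s0) // mulVf // gt_eqF.
  rewrite /sparse; apply: leq_trans hsp; apply: subset_leq_card.
  apply/fintype.subsetP => i; rewrite !inE /w !mxE; apply: contra => /eqP ui.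
  have yi : y i 0 = 0.
    apply/eqP; apply: contraT => yi.
    have : i \in supp y by rewrite inE.
    by move/(fintype.subsetP hsupp); rewrite inE ui eqxx.
  by rewrite ui yi subrr mulr0.
have hbw : forall l, b l = s * absTu T w l.
  move=> l; rewrite /b /absTu /w -scalemxAr [in RHS]mxE normrM ger0_norm ?invr_ge0 ?(ltW s0) //.
  by rewrite mulrA mulfV ?gt_eqF // mul1r.
set K' := kmax k2 (absTu T w).
have K'0 : 0 <= K' := KF0 k2 (absTu_ge0 T w).
have hKK : kmax k2 b <= s * K'.
  apply: KF2; first by apply: mulr_ge0 => //; exact: ltW.
  apply: leq_ltn_trans (KF1 (absTu T w) h2).
  apply: sub_count => l /=; by rewrite hbw ltr_pM2l.
set Sg := \sum_(1 <= i < r.+1) kmax i (absTu T w) ^+ 2.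
have hMw : Num.sqrt Sg <= M by apply: (ub_le_sup hE3 (x:=Num.sqrt Sg)); exists w.
have Sg0 : 0 <= Sg by apply: sumr_ge0 => i _; exact: sqr_ge0.
have hSg : Sg <= M ^+ 2.
  have := sqr_sqrtr Sg0; have := sqrtr_ge0 Sg; timeout 15 nra.
have hkS : k2%:R * K' ^+ 2 <= Sg.
  rewrite /Sg (@big_cat_nat _ _ _ k2.+1); last (by rewrite ltnS); last by [].
  idtac "X1".
  rewrite -[X in X <= _]addr0; apply: lerD; last by apply: sumr_ge0 => i _; exact: sqr_ge0.
  idtac "X2".
  rewrite mulr_natl.
  have -> : K' ^+ 2 *+ k2 = \sum_(1 <= i < k2.+1) K' ^+ 2 by rewrite sumr_const_nat subn1.
  apply: ler_sum_nat => i /andP[i1 i2].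
  have hik : (0 < i <= k2)%N by rewrite i1 -ltnS i2.
  have hi : K' <= kmax i (absTu T w) := @Kanti R p (absTu T w) i k2 (absTu_ge0 T w) hik.
  have := K'0; timeout 15 nra.
set K := kmax k2 b.
have K0 : 0 <= K := KF0 k2 (absTu_ge0 T (u - y)).
have e1 : K <= rho * K'.
  apply: le_trans hKK _; apply: ler_wpM2r => //.
have e2 : K ^+ 2 <= rho ^+ 2 * K' ^+ 2 by timeout 15 nra.
have kk0 : 0 <= (k2%:R : R) by exact: ler0n.
have e3 : K ^+ 2 * k2%:R <= rho ^+ 2 * M ^+ 2.
  apply: le_trans (_ : rho ^+ 2 * K' ^+ 2 * k2%:R <= _).
    exact: ler_wpM2r.
  rewrite -mulrA [K' ^+ 2 * _]mulrC; apply: ler_wpM2l; [exact: sqr_ge0 | exact: le_trans hkS hSg].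
have rk : (r%:R : R) <= 2 * k2%:R.
  by rewrite -natrM ler_nat.
have e4 : (K * sr) ^+ 2 <= (4 * rho * M) ^+ 2.
  rewrite exprMn srr.
  have : K ^+ 2 * r%:R <= K ^+ 2 * (2 * k2%:R).
    by apply: ler_wpM2l => //; exact: sqr_ge0.
  have := sqr_ge0 (rho * M); rewrite exprMn; timeout 15 nra.
have e5 : K * sr <= 4 * rho * M.
  have : 0 <= 4 * rho * M by apply: mulr_ge0 => //; apply: mulr_ge0 => //; exact: ltW.
  have : 0 <= K * sr by apply: mulr_ge0 => //; exact: ltW.
  timeout 15 nra.
by rewrite mulrAC ler_pdivlMr.
Qed.
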